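(* For every integer $n\geq 1$ there is a bijection $\phi:\mathfrak{S}_n\to\mathfrak{S}_n$ such that for every $\sigma\in\mathfrak{S}_n$, writing $\tau=\phi(\sigma)$, we have $$\overline{\mathrm{Fix}}(\sigma)=\mathrm{Suc}(\tau),\qquad \overline{\mathrm{Drop}}(\sigma)=\mathrm{najSuc}(\tau),\qquad \overline{\mathrm{Exc}}(\sigma)=\mathrm{Pred}(\tau).$$
   Context: $\mathfrak{S}_n$ denotes the set of permutations of $[n]=\{1,\dots,n\}$, written in one-line notation $\sigma=\sigma_1\sigma_2\cdots\sigma_n$. For $\sigma\in\mathfrak{S}_n$ define: - $\mathrm{Suc}(\sigma)=\{1\le i\le n-1 : \sigma_i+1=\sigma_{i+1}\}$ (successions); - $\overline{\mathrm{Fix}}(\sigma)=\{1\le i\le n-1 : \sigma_i=i\}$ (fixed points other than $n$); - $\mathrm{najSuc}(\sigma)=\{1\le i\le n-2 : \text{there exists } j \text{ with } i+2\le j\le n \text{ and } \sigma_j=\sigma_i+1\}$ (non-adjacent successions); - $\mathrm{Pred}(\sigma)=\{2\le i\le n : \text{there exists } j \text{ with } 1\le j<i \text{ and } \sigma_j=\sigma_i+1\}$ (predecessors); - $\overline{\mathrm{Drop}}(\sigma)=\{\sigma_i : 1\le i\le n-1,\ \sigma_i<i\}$ (the set of values, not positions, of drops at positions other than $n$); - $\overline{\mathrm{Exc}}(\sigma)=\{\sigma_i : 1\le i\le n-1,\ \sigma_i>i\}$ (the set of values, not positions, of excedances at positions other than $n$). Example: for $\tau=4\,1\,2\,6\,7\,5\,3$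 one has $\mathrm{Suc}(\tau)=\{2,4\}$, $\mathrm{najSuc}(\tau)=\{1,3\}$, $\mathrm{Pred}(\tau)=\{6,7\}$. *)

(* Defs.v *)
From mathcomp Require Import all_boot all_fingroup.
Set Implicit Arguments. Unset Strict Implicit. Unset Printing Implicit Defensive.

(* A permutation s : 'S_n (of {0,..,n-1}) represents sigma in S_n (of [n])
   via sigma_i = (s (i-1)) + 1.  [oneline s i] is sigma_i for 1 <= i <= n
   (and 0 outside that range, never used). *)
Definition oneline n (s : 'S_n) (i : nat) : nat :=
  match insub i.-1 : option 'I_n with Some j => (s j).+1 | None => 0 end.

Definition Suc n (s : 'S_n) : pred nat :=
  fun i => [&& 1 <= i, i <= n - 1 & (oneline s i).+1 == oneline s i.+1].

Definition Fixbar n (s : 'S_n) : pred nat :=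
  fun i => [&& 1 <= i, i <= n - 1 & oneline s i == i].

Definition najSuc n (s : 'S_n) : pred nat :=
  fun i => [&& 1 <= i, i <= n - 2 &
    [exists j : 'I_n, (i + 2 <= j.+1) && (oneline s j.+1 == (oneline s i).+1)]].

Definition Pred n (s : 'S_n) : pred nat :=
  fun i => [&& 2 <= i, i <= n &
    [exists j : 'I_n, (j.+1 < i) && (oneline s j.+1 == (oneline s i).+1)]].

Definition Dropbar n (s : 'S_n) : pred nat :=
  fun v => [exists i : 'I_n, [&& i.+1 <= n - 1, oneline s i.+1 < i.+1
                                & oneline s i.+1 == v]].

Definition Excbar n (s : 'S_n) : pred nat :=
  fun v => [exists i : 'I_n, [&& i.+1 <= n - 1, i.+1 < oneline s i.+1
                                & oneline s i.+1 == v]].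

(* Main.v *)
Require Import Defs.
From mathcomp Require Import zify.
From mathcomp Require Import all_boot all_fingroup.
Set Implicit Arguments. Unset Strict Implicit. Unset Printing Implicit Defensive.

Section Core.
Variables (n : nat) (t p : nat -> nat).
Hypothesis n0 : 0 < n.
Hypothesis tn : forall i, i < n -> t i < n.
Hypothesis pn : forall k, k < n -> p k < n.
Hypothesis ptK : forall i, i < n -> p (t i) = i.
Hypothesis tpK : forall k, k < n -> t (p k) = k.

Definition k0 := t 0.
Definition inR k (x : nat) := (x < n) && (k <= t x < k0).
Definition mx k := \max_(x < n | inR k x) x.
Definition RL x := (t x < k0) && (mx (t x) == x).
Definition jmin x := find (fun j => mx j == x) (iota 0 n).
Definition G x := if RL x then p (jmin x) else p (t x).+1.
Definition g x := p (t x).+1.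
Definition a0 := p n.-1.

Lemma k0n : k0 < n. Proof. exact: tn. Qed.

Lemma p_inj k l : k < n -> l < n -> p k = p l -> k = l.
Proof. by move=> kn ln e; rewrite -(tpK kn) -(tpK ln) e. Qed.

Lemma t_inj x y : x < n -> y < n -> t x = t y -> x = y.
Proof. by move=> kn ln e; rewrite -(ptK kn) -(ptK ln) e. Qed.

Lemma mx_ub k x : inR k x -> x <= mx k.
Proof.
move=> H; have xn : x < n by case/andP: H.
exact: (leq_bigmax_cond (Ordinal xn) (P := fun y : 'I_n => inR k y) (F := fun y : 'I_n => val y)).
Qed.

Lemma mx_in k : k < k0 -> inR k (mx k).
Proof.
move=> kk.
have kn : k < n by have := k0n; lia.
have H : inR k (p k) by rewrite /inR pn // tpK //; apply/andP; split => //; apply/andP.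
rewrite /mx (bigmax_eq_arg (Ordinal (pn kn))) //.
by case: arg_maxnP => //= i.
Qed.

Lemma mx_mono k k' : k <= k' -> mx k' <= mx k.
Proof.
move=> kk; apply/bigmax_leqP => i /andP[_ /andP[h1 h2]].
apply: mx_ub; rewrite /inR ltn_ord h2 andbT /=; lia.
Qed.

Lemma jmin_spec x : x < n -> RL x ->
  [/\ jmin x <= t x, mx (jmin x) = x & forall j, j < jmin x -> mx j != x].
Proof.
move=> xn /andP[tk /eqP mxx].
have txn := tn xn.
have hs : has (fun j => mx j == x) (iota 0 n).
  by apply/hasP; exists (t x); [rewrite mem_iota | apply/eqP].
have fs : jmin x < n by rewrite /jmin; move: hs; rewrite has_find size_iota.
have bf : forall j, j < jmin x -> mx j != x.
  move=> j jl; have := before_find 0 jl; rewrite nth_iota /=; last by lia.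
  by move=> ->.
split => //.
- by rewrite leqNgt; apply/negP => /bf; rewrite mxx eqxx.
- by have := nth_find 0 hs; rewrite -/(jmin x) nth_iota // => /eqP.
Qed.

Lemma a0_t x : x < n -> (x == a0) = (t x == n.-1).
Proof.
move=> xn; rewrite /a0; apply/eqP/eqP => [->|<-]; first by rewrite tpK //; lia.
by rewrite ptK.
Qed.

Lemma G_prop x : x < n -> x != a0 ->
  [/\ G x < n, 0 < G x & G x = g x \/ (G x <= x /\ g x <= x)].
Proof.
move=> xn xa; have txn := tn xn.
have tx1 : (t x).+1 < n by move: xa; rewrite a0_t //; lia.
rewrite /G /g; case: ifP => rl.
- have [jl mj bf] := jmin_spec xn rl.
  have tk : t x < k0 by case/andP: rl.
  have jn : jmin x < n by lia.
  split; first exact: pn.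
  + rewrite lt0n; apply/eqP => e.
    have : p (jmin x) = p k0 by rewrite e /k0 ptK.
    move/p_inj => /(_ jn k0n); lia.
  + right; split.
    * rewrite -{2}mj; apply: mx_ub; rewrite /inR pn //= tpK //; lia.
    * case: (ltnP (t x).+1 k0) => h.
      -- case/andP: rl => _ /eqP {2}<-; apply: mx_ub; rewrite /inR pn //= tpK //; lia.
      -- have -> : (t x).+1 = k0 by lia.
         by rewrite /k0 ptK.
- split; first exact: pn.
  + rewrite lt0n; apply/eqP => e.
    have : p (t x).+1 = p k0 by rewrite e /k0 ptK.
    move/p_inj => /(_ tx1 k0n) ek.
    move/negbT: rl; rewrite /RL negb_and; case/orP; first by lia.
    case/negP; apply/eqP; apply/eqP; rewrite eqn_leq; apply/andP; split.
    * have ki : inR (t x) (mx (t x)) by apply: mx_in; lia.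
      case/andP: ki => mn /andP[h1 h2].
      have : t (mx (t x)) = t x by lia.
      by move/(t_inj mn xn) => ->.
    * apply: mx_ub; rewrite /inR xn /=; lia.
  + by left.
Qed.

Lemma G_suffix j : k0 <= j -> j < n.-1 -> G (p j) = p j.+1.
Proof.
move=> h1 h2; have jn : j < n by lia.
rewrite /G /RL tpK //; case: ifP => [/andP[]|]; first by lia.
by [].
Qed.

Lemma G_nonRL k : 0 < k -> k < k0 -> p k.-1 != mx k.-1 -> G (p k.-1) = p k.
Proof.
move=> k1 k2 ne; have kn : k.-1 < n by have := k0n; lia.
rewrite /G /RL tpK //; case: ifP => [/andP[_ /eqP e]|]; first by rewrite e eqxx in ne.
by move=> _; congr p; lia.
Qed.

Lemma mx_RL k : k < k0 -> RL (mx k) /\ k <= t (mx k).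
Proof.
move=> kk; have := mx_in kk; case/andP => mn /andP[h1 h2].
split => //; apply/andP; split => //.
rewrite eqn_leq; apply/andP; split.
- exact: mx_mono.
- apply: mx_ub; rewrite /inR mn /=; lia.
Qed.

Lemma G_RL k : k < k0 -> (k = 0 \/ (0 < k /\ p k.-1 = mx k.-1)) -> G (mx k) = p k.
Proof.
move=> kk hk; have [rl tk] := mx_RL kk.
have mn : mx k < n by case/andP: (mx_in kk).
have [jl mj bf] := jmin_spec mn rl.
rewrite /G rl; congr p.
apply/eqP; rewrite eqn_leq; apply/andP; split.
- rewrite leqNgt; apply/negP => h2.
  by have := bf _ h2; rewrite eqxx.
- case: hk => [-> //|[k1 e]].
  rewrite leqNgt; apply/negP => h.
  have hkn : k.-1 < n by have := k0n; lia.
  have : mx (jmin (mx k)) >= mx k.-1 by apply: mx_mono; lia.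
  rewrite mj -e => le1.
  have : mx k <= p k.-1.
    by rewrite e; apply: mx_mono; lia.
  move=> le2.
  have ee : p k.-1 = mx k by lia.
  have : t (p k.-1) = t (mx k) by rewrite ee.
  rewrite tpK //; lia.
Qed.

Lemma G_inj x y : x < n -> y < n -> x != a0 -> y != a0 -> G x = G y -> x = y.
Proof.
have key : forall x y, x < n -> y < n -> x != a0 -> ~~ RL x -> RL y -> G x = G y -> False.
  move=> {}x {}y xn yn xa rx ry.
  have [jl mj bf] := jmin_spec yn ry.
  have tx1 : (t x).+1 < n by move: xa; rewrite a0_t //; have := tn xn; lia.
  have tyk : t y < k0 by case/andP: ry.
  rewrite /G (negbTE rx) ry => /p_inj e.
  have ej : (t x).+1 = jmin y by apply: e; have := tn yn; lia.
  have := bf (t x) ltac:(lia) => ne.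
  have txk : t x < k0 by lia.
  have := mx_in txk; case/andP => mn /andP[h1 h2].
  case: (eqVneq (t (mx (t x))) (t x)) => et.
  - move/negP: rx; apply; rewrite /RL txk /=; apply/eqP; exact: t_inj et.
  - have : mx (t x) <= mx (jmin y) by apply: mx_ub; rewrite /inR mn /=; lia.
    rewrite mj => le1.
    have : mx (jmin y) <= mx (t x) by apply: mx_mono; lia.
    rewrite mj => le2.
    by move: ne; rewrite eqn_leq le1 le2.
move=> xn yn xa ya.
case: (boolP (RL x)) => rx; case: (boolP (RL y)) => ry.
- have [_ mjx _] := jmin_spec xn rx; have [_ mjy _] := jmin_spec yn ry.
  rewrite /G rx ry => /p_inj e.
  have := tn xn; have := tn yn; have [jx _ _] := jmin_spec xn rx; have [jy _ _] := jmin_spec yn ry.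
  move=> *; by rewrite -mjx -mjy e //; lia.
- by move=> e; case: (key y x yn xn ya ry rx (esym e)).
- by move=> e; case: (key x y xn yn xa rx ry e).
- rewrite /G (negbTE rx) (negbTE ry) => /p_inj e.
  have tx1 : (t x).+1 < n by move: xa; rewrite a0_t //; have := tn xn; lia.
  have ty1 : (t y).+1 < n by move: ya; rewrite a0_t //; have := tn yn; lia.
  apply: t_inj => //; have := e tx1 ty1; lia.
Qed.

End Core.
Section Uniq.
Variables (n : nat) (t p t' p' : nat -> nat).
Hypothesis n0 : 0 < n.
Hypothesis tn : forall i, i < n -> t i < n.
Hypothesis pn : forall k, k < n -> p k < n.
Hypothesis ptK : forall i, i < n -> p (t i) = i.
Hypothesis tpK : forall k, k < n -> t (p k) = k.
Hypothesis tn' : forall i, i < n -> t' i < n.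
Hypothesis pn' : forall k, k < n -> p' k < n.
Hypothesis ptK' : forall i, i < n -> p' (t' i) = i.
Hypothesis tpK' : forall k, k < n -> t' (p' k) = k.
Hypothesis ea : a0 n p = a0 n p'.
Hypothesis eG : forall x, x < n -> x != a0 n p -> G n t p x = G n t' p' x.

Lemma iter_suffix m : k0 t + m <= n.-1 -> iter m (G n t p) 0 = p (k0 t + m).
Proof.
elim: m => [|m IH] h; first by rewrite addn0 /k0 ptK.
rewrite iterS IH; last by lia.
by rewrite (G_suffix n0 tpK); [congr p; lia | lia | lia].
Qed.

Lemma iter_suffix' m : k0 t' + m <= n.-1 -> iter m (G n t' p') 0 = p' (k0 t' + m).
Proof.
elim: m => [|m IH] h; first by rewrite addn0 /k0 ptK'.
rewrite iterS IH; last by lia.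
by rewrite (G_suffix n0 tpK'); [congr p'; lia | lia | lia].
Qed.

Lemma iter_eq m : k0 t + m <= n.-1 -> k0 t' + m <= n.-1 ->
  iter m (G n t p) 0 = iter m (G n t' p') 0.
Proof.
elim: m => [//|m IH] h h'.
rewrite !iterS -IH; try lia.
apply: eG; rewrite iter_suffix; try lia.
- apply: pn; have := k0n n0 tn; lia.
- rewrite (a0_t n0 ptK tpK); last by apply: pn; have := k0n n0 tn; lia.
  rewrite tpK; last by have := k0n n0 tn; lia.
  apply/eqP; lia.
Qed.

Lemma k0_eq : k0 t = k0 t'.
Proof.
have k1 := k0n n0 tn; have k2 := k0n n0 tn'.
have H : forall a b, a < b -> k0 t + (n.-1 - k0 t) = n.-1 -> k0 t' + (n.-1 - k0 t) < n.-1 ->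
   False.
  move=> _ _ _ h1 h2.
  have := iter_eq (m := n.-1 - k0 t) ltac:(lia) ltac:(lia).
  rewrite iter_suffix ?iter_suffix'; try lia.
  rewrite h1 -/(a0 n p) ea => e.
  have : p' (k0 t' + (n.-1 - k0 t)) == a0 n p' by rewrite e.
  rewrite (a0_t n0 ptK' tpK'); last by apply: pn'; lia.
  rewrite tpK'; last by lia.
  move/eqP; lia.
have H' : forall a b, a < b -> k0 t' + (n.-1 - k0 t') = n.-1 -> k0 t + (n.-1 - k0 t') < n.-1 ->
   False.
  move=> _ _ _ h1 h2.
  have := iter_eq (m := n.-1 - k0 t') ltac:(lia) ltac:(lia).
  rewrite iter_suffix ?iter_suffix'; try lia.
  rewrite h1 -/(a0 n p') -ea => e.
  have : p (k0 t + (n.-1 - k0 t')) == a0 n p by rewrite -e.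
  rewrite (a0_t n0 ptK tpK); last by apply: pn; lia.
  rewrite tpK; last by lia.
  move/eqP; lia.
case: (ltngtP (k0 t) (k0 t')) => // h.
- by case: (H' 0 1) => //; lia.
- by case: (H 0 1) => //; lia.
Qed.

Lemma suffix_eq j : k0 t <= j -> j < n -> p j = p' j.
Proof.
move=> h1 h2.
have e := iter_eq (m := j - k0 t) ltac:(lia) ltac:(rewrite -k0_eq; lia).
rewrite iter_suffix ?iter_suffix' in e; try lia; last by rewrite -k0_eq; lia.
by move: e; rewrite -k0_eq; have -> : k0 t + (j - k0 t) = j by lia.
Qed.

Lemma inR_eq k : (forall j, j < k -> p j = p' j) -> forall x, inR n t k x = inR n t' k x.
Proof.
move=> hp x; rewrite /inR -k0_eq; case: (ltnP x n) => //= xn.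
have k1 := k0n n0 tn.
have E : forall i, i < n -> (i < k \/ k0 t <= i) -> p i = p' i.
  move=> i i1 [] hi; [exact: hp | exact: suffix_eq].
have tx := tn xn; have tx' := tn' xn.
case: (boolP ((t x < k) || (k0 t <= t x))) => h.
- have e : p' (t x) = x by rewrite -E ?ptK //; lia.
  have : t' x = t x by rewrite -{1}e tpK'.
  move=> ->; by [].
- case: (boolP ((t' x < k) || (k0 t <= t' x))) => h'.
  + have e : p (t' x) = x by rewrite E ?ptK' //; lia.
    have : t x = t' x by rewrite -{1}e tpK.
    lia.
  + apply/idP/idP => _; apply/andP; lia.
Qed.

Lemma mx_eq k : (forall j, j < k -> p j = p' j) -> mx n t k = mx n t' k.
Proof. by move=> h; apply: eq_bigl => x; rewrite inR_eq. Qed.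

Lemma prefix_eq : forall k, k <= k0 t -> forall j, j < k -> p j = p' j.
Proof.
have k1 := k0n n0 tn.
elim => [//|k IH] hk j hj.
case: (ltnP j k) => hjk; first by apply: IH => //; lia.
have -> : j = k by lia.
have IH' := IH ltac:(lia).
have kk : k < k0 t by lia.
have kk' : k < k0 t' by rewrite -k0_eq.
have nota : forall x, t x < n.-1 -> x < n -> x != a0 n p.
  by move=> x h xn; rewrite (a0_t n0 ptK tpK) //; apply/eqP; lia.
case: (posnP k) => [k0'|kpos].
- subst k.
  rewrite -(G_RL n0 tn pn tpK kk (or_introl erefl)).
  rewrite -(G_RL n0 tn' pn' tpK' kk' (or_introl erefl)).
  rewrite -(mx_eq (k := 0)) //; apply: eG; have := mx_in n0 tn pn tpK kk; case/andP => mn /andP[_ h2] //.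
  by apply: nota => //; lia.
- have e1 : p k.-1 = p' k.-1 by apply: IH'; lia.
  have e2 : mx n t k.-1 = mx n t' k.-1 by apply: mx_eq => i hi; apply: IH'; lia.
  have e3 : mx n t k = mx n t' k by apply: mx_eq.
  have pkn : p k.-1 < n by apply: pn; lia.
  case: (eqVneq (p k.-1) (mx n t k.-1)) => e.
  + rewrite -(G_RL n0 tn pn tpK kk (or_intror (conj kpos e))).
    rewrite -(G_RL n0 tn' pn' tpK' kk' (or_intror (conj kpos _))); last by rewrite -e1 -e2.
    rewrite -e3; apply: eG; have := mx_in n0 tn pn tpK kk; case/andP => mn /andP[_ h2] //.
    by apply: nota => //; lia.
  + rewrite -(G_nonRL n0 tn tpK kpos kk e).
    rewrite -(G_nonRL n0 tn' tpK' kpos kk' _); last by rewrite -e1 -e2.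
    rewrite -e1; apply: eG => //; apply: nota => //; rewrite tpK; lia.
Qed.

Lemma all_eq k : k < n -> p k = p' k.
Proof.
move=> kn; case: (ltnP k (k0 t)) => h.
- by apply: (prefix_eq (k := k0 t)).
- exact: suffix_eq.
Qed.
End Uniq.

Section Perm.
Variable m : nat.
Notation N := m.+1.

Lemma oneline_S (s : 'S_N) i : i < N -> oneline s i.+1 = (s (inord i)).+1.
Proof.
move=> h; rewrite /oneline /= insubT /=; congr (_.+1); congr (s _).
by apply: val_inj; rewrite /= inordK.
Qed.

Variable tau : 'S_N.
Definition tt i := nat_of_ord (tau (inord i)).
Definition pp k := nat_of_ord ((tau^-1)%g (inord k)).
Lemma N0 : 0 < N. Proof. by []. Qed.
Lemma ttn i : i < N -> tt i < N. Proof. by move=> _; rewrite /tt ltn_ord. Qed.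
Lemma ppn i : i < N -> pp i < N. Proof. by move=> _; rewrite /pp ltn_ord. Qed.
Lemma ptK i : i < N -> pp (tt i) = i.
Proof. by move=> h; rewrite /pp /tt inord_val permK; exact: inordK. Qed.
Lemma tpK i : i < N -> tt (pp i) = i.
Proof. by move=> h; rewrite /pp /tt inord_val permKV; exact: inordK. Qed.

Definition uu x := if x == a0 N pp then N.-1 else (G N tt pp x).-1.

Lemma uu_lt x : x < N -> uu x < N.
Proof.
rewrite /uu; case: ifP => // /negbT xa xn.
by have [h1 h2 _] := G_prop N0 ttn ppn ptK tpK xn xa; lia.
Qed.

Lemma uu_inj x y : x < N -> y < N -> uu x = uu y -> x = y.
Proof.
move=> xn yn; rewrite /uu.
have h1 := G_prop N0 ttn ppn ptK tpK.
case: ifP => [/eqP ->|/negbT xa]; case: ifP => [/eqP ->|/negbT ya] //.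
- by have [u1 u2 _] := h1 _ yn ya; lia.
- by have [u1 u2 _] := h1 _ xn xa; lia.
- have [u1 u2 _] := h1 _ yn ya; have [v1 v2 _] := h1 _ xn xa.
  move=> e; apply: (G_inj N0 ttn ppn ptK tpK) => //; lia.
Qed.

Definition uo (x : 'I_N) : 'I_N := inord (uu x).
Lemma uo_inj : injective uo.
Proof.
move=> x y; rewrite /uo => /(congr1 (@nat_of_ord _)); rewrite !inordK ?uu_lt //.
by move/(uu_inj (ltn_ord x) (ltn_ord y)) => /val_inj.
Qed.

Definition hmap : 'S_N := ((perm uo_inj)^-1)%g.

Lemma hmap_u x j : x < N -> j < N -> (nat_of_ord (hmap (inord j)) == x) = (uu x == j).
Proof.
move=> xn jn; apply/eqP/eqP => [<-|<-].
- have : (perm uo_inj) (hmap (inord j)) = inord j by rewrite permKV.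
  rewrite permE /uo => /(congr1 (@nat_of_ord _)); rewrite !inordK ?uu_lt //.
- have e : (inord (uu x) : 'I_N) = uo (inord x) by rewrite /uo inordK.
  have e2 : hmap (perm uo_inj (inord x)) = inord x by rewrite /hmap permK.
  by rewrite permE in e2; rewrite e e2; exact: inordK.
Qed.

Notation a := (a0 N pp).
Notation GG := (G N tt pp).
Notation gg := (g tt pp).

Lemma Gp x : x < N -> x != a ->
  [/\ GG x < N, 0 < GG x & GG x = gg x \/ (GG x <= x /\ gg x <= x)].
Proof. exact: (G_prop N0 ttn ppn ptK tpK). Qed.

Lemma a_t x : x < N -> (x == a) = (tt x == N.-1).
Proof. exact: (a0_t N0 ptK tpK). Qed.

Lemma uu_a : uu a = N.-1. Proof. by rewrite /uu eqxx. Qed.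
Lemma uu_na x : x != a -> uu x = (GG x).-1.
Proof. by rewrite /uu => /negbTE ->. Qed.

Lemma gg_spec x y : x < N -> x != a -> y < N -> (tt y == (tt x).+1) = (y == gg x).
Proof.
move=> xn xa yn; have := ttn xn.
move: xa; rewrite a_t // => xa txn.
have tx1 : (tt x).+1 < N by lia.
rewrite /g; apply/eqP/eqP => [<-|->]; first by rewrite ptK.
by rewrite tpK.
Qed.

Lemma gg_lt x : x < N -> x != a -> gg x < N.
Proof. move=> xn xa; apply: ppn; move: xa; rewrite a_t //; have := ttn xn; lia. Qed.

Lemma gg_neq x : x < N -> x != a -> gg x != x.
Proof.
move=> xn xa; apply/eqP => e.
have := gg_spec xn xa xn; rewrite e eqxx; lia.
Qed.

Lemma fix_eq k : Fixbar hmap k = Suc tau k.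
Proof.
rewrite /Fixbar /Suc; case: k => [//|i] /=.
case: (leqP i.+1 (N - 1)) => hi /=; last by [].
have iN : i < N by lia.
have i1N : i.+1 < N by lia.
rewrite !oneline_S // eqSS hmap_u // -/(tt i) -/(tt i.+1).
case: (eqVneq i a) => ia.
- have : tt i = N.-1 by apply/eqP; rewrite -a_t // ia.
  have := ttn i1N; rewrite ia uu_a.
  move=> h1 h2; apply/eqP/eqP; lia.
- have [G1 G2 G3] := Gp iN ia.
  rewrite uu_na // (_ : ((tt i).+2 == (tt i.+1).+1) = (tt i.+1 == (tt i).+1)); last by rewrite eqSS eq_sym.
  rewrite gg_spec //.
  have gl := gg_lt iN ia.
  case: G3 => [e|[h1 h2]]; apply/eqP/eqP; lia.
Qed.

Lemma hmap_uu x : x < N -> nat_of_ord (hmap (inord (uu x))) = x.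
Proof. by move=> xn; apply/eqP; rewrite hmap_u // uu_lt. Qed.

Lemma hmap_inv i : i < N -> uu (hmap (inord i)) = i.
Proof. by move=> iN; apply/eqP; rewrite -hmap_u. Qed.

Definition chr v (P : nat -> bool) := (0 < v) && (v.-1 < N) && (v.-1 != a) && P v.-1.

Lemma drop_char v : Dropbar hmap v = chr v (fun x => x.+2 <= GG x).
Proof.
rewrite /Dropbar /chr; apply/existsP/idP.
- case=> i /and3P[h1]; rewrite oneline_S // inord_val => h2 /eqP h3.
  have xn := ltn_ord (hmap i).
  have hi := hmap_inv (ltn_ord i); rewrite inord_val in hi.
  rewrite -h3 /=.
  move: hi h2; set x := nat_of_ord _.
  case: (eqVneq x a) => xa; first by rewrite xa uu_a => hi; lia.
  have [G1 G2 _] := Gp xn xa.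
  rewrite uu_na // => hi h2; rewrite xn /=; lia.
- case/andP => /andP[/andP[v0 xn] xa] h.
  exists (Ordinal (uu_lt xn)); rewrite /= oneline_S ?uu_lt // hmap_uu //.
  have [G1 G2 _] := Gp xn xa.
  rewrite uu_na //; apply/and3P; split; try lia; apply/eqP; lia.
Qed.

Lemma exc_char v : Excbar hmap v = chr v (fun x => GG x <= x).
Proof.
rewrite /Excbar /chr; apply/existsP/idP.
- case=> i /and3P[h1]; rewrite oneline_S // inord_val => h2 /eqP h3.
  have xn := ltn_ord (hmap i).
  have hi := hmap_inv (ltn_ord i); rewrite inord_val in hi.
  rewrite -h3 /=.
  move: hi h2; set x := nat_of_ord _.
  case: (eqVneq x a) => xa; first by rewrite xa uu_a => hi; have := ltn_ord (hmap i); lia.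
  have [G1 G2 _] := Gp xn xa.
  rewrite uu_na // => hi h2; rewrite xn /=; lia.
- case/andP => /andP[/andP[v0 xn] xa] h.
  exists (Ordinal (uu_lt xn)); rewrite /= oneline_S ?uu_lt // hmap_uu //.
  have [G1 G2 _] := Gp xn xa.
  rewrite uu_na //; apply/and3P; split; try lia; apply/eqP; lia.
Qed.

Lemma najSuc_char v : najSuc tau v = chr v (fun x => x.+2 <= gg x).
Proof.
rewrite /najSuc /chr.
case: (posnP v) => [->//|v0].
have -> : v = (v.-1).+1 by lia.
set x := v.-1; rewrite /= -/x.
case: (ltnP x N) => xn; last by apply/negbTE; apply/negP => /andP[h _]; lia.
rewrite /=.
case: (eqVneq x a) => xa /=.
- apply/negbTE; apply/negP => /andP[_ /existsP[j /andP[_]]].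
  rewrite !oneline_S // eqSS.
  move/eqP: xa; rewrite a_t // => /eqP e; rewrite -/(tt j) -/(tt x) e.
  have := ttn (ltn_ord j); rewrite /tt inord_val; lia.
- apply/andP/idP.
  + case=> _ /existsP[j /andP[h1]]; rewrite !oneline_S // eqSS.
    rewrite -/(tt x) (_ : nat_of_ord (tau (inord j)) = tt j); last by rewrite /tt inord_val.
    by rewrite gg_spec // => /eqP <-; lia.
  + move=> h; have gl := gg_lt xn xa; split; try lia.
    apply/existsP; exists (Ordinal gl); rewrite /= !oneline_S // eqSS.
    rewrite -/(tt x) (_ : nat_of_ord (tau (inord (gg x))) = tt (gg x)) //.
    rewrite gg_spec // eqxx andbT; lia.
Qed.

Lemma pred_char v : Pred tau v = chr v (fun x => gg x < x).
Proof.
rewrite /Pred /chr.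
case: (posnP v) => [->//|v0].
have -> : v = (v.-1).+1 by lia.
set x := v.-1; rewrite /= -/x.
case: (ltnP x N) => xn; last by apply/negbTE; apply/negP => /and3P[_ h _]; lia.
rewrite /=.
case: (eqVneq x a) => xa /=.
- apply/negbTE; apply/negP => /andP[_ /existsP[j /andP[_]]].
  rewrite !oneline_S // eqSS.
  move/eqP: xa; rewrite a_t // => /eqP e; rewrite -/(tt j) -/(tt x) e.
  have := ttn (ltn_ord j); rewrite /tt inord_val; lia.
- apply/andP/idP.
  + case=> _ /existsP[j /andP[h1]]; rewrite !oneline_S // eqSS.
    rewrite -/(tt x) (_ : nat_of_ord (tau (inord j)) = tt j); last by rewrite /tt inord_val.
    by rewrite gg_spec // => /eqP <-; lia.
  + move=> h; have gl := gg_lt xn xa; split; try lia.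
    apply/existsP; exists (Ordinal gl); rewrite /= !oneline_S // eqSS.
    rewrite -/(tt x) (_ : nat_of_ord (tau (inord (gg x))) = tt (gg x)) //.
    rewrite gg_spec // eqxx andbT; lia.
Qed.

Lemma drop_eq v : Dropbar hmap v = najSuc tau v.
Proof.
rewrite drop_char najSuc_char /chr.
case: (posnP v) => //= v0; case: (ltnP v.-1 N) => //= xn.
case: (eqVneq v.-1 a) => //= xa.
have [G1 G2 G3] := Gp xn xa.
case: G3 => [e|[h1 h2]]; apply/idP/idP; lia.
Qed.

Lemma exc_eq v : Excbar hmap v = Pred tau v.
Proof.
rewrite exc_char pred_char /chr.
case: (posnP v) => //= v0; case: (ltnP v.-1 N) => //= xn.
case: (eqVneq v.-1 a) => //= xa.
have [G1 G2 G3] := Gp xn xa.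
have := gg_neq xn xa => /eqP ne.
case: G3 => [e|[h1 h2]]; apply/idP/idP; lia.
Qed.
End Perm.

Lemma hmap_inj m : injective (@hmap m).
Proof.
move=> t1 t2 e.
have U : forall x, x < m.+1 -> uu t1 x = uu t2 x.
  move=> x xn; have := hmap_inv t2 (uu_lt t1 xn).
  by rewrite -e hmap_uu.
have G1 := @Gp m t1; have G2 := @Gp m t2.
have A : forall x, x < m.+1 -> (x == a0 m.+1 (pp t1)) = (x == a0 m.+1 (pp t2)).
  move=> x xn; have ux := U x xn; move: ux.
  case: (eqVneq x (a0 m.+1 (pp t1))) => x1; case: (eqVneq x (a0 m.+1 (pp t2))) => x2 //.
  - rewrite {1}x1 uu_a uu_na //; have [g1 g2 _] := G2 _ xn x2; lia.
  - rewrite {2}x2 uu_a uu_na //; have [g1 g2 _] := G1 _ xn x1; lia.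
have ea : a0 m.+1 (pp t1) = a0 m.+1 (pp t2).
  apply/eqP; rewrite -A ?eqxx //; exact: ppn.
have eG : forall x, x < m.+1 -> x != a0 m.+1 (pp t1) -> G m.+1 (tt t1) (pp t1) x = G m.+1 (tt t2) (pp t2) x.
  move=> x xn x1; have x2 : x != a0 m.+1 (pp t2) by rewrite -A.
  have := U x xn; rewrite !uu_na //.
  have [g1 g2 _] := G1 _ xn x1; have [h1 h2 _] := G2 _ xn x2; lia.
have P := all_eq (N0 m) (@ttn m t1) (@ppn m t1) (@ptK m t1) (@tpK m t1)
   (@ttn m t2) (@ppn m t2) (@ptK m t2) (@tpK m t2) ea eG.
have : (t1^-1)%g = (t2^-1)%g.
  apply/permP => k; apply: val_inj => /=.
  have := P k (ltn_ord k); rewrite /pp inord_val; exact.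
by move/(congr1 (fun s => (s^-1)%g)); rewrite !invgK.
Qed.

Theorem mainTheorem1 (n : nat) (hn : 1 <= n) :
  exists phi : 'S_n -> 'S_n, bijective phi /\
    forall sigma : 'S_n,
      (forall k, Fixbar sigma k = Suc (phi sigma) k) /\
      (forall k, Dropbar sigma k = najSuc (phi sigma) k) /\
      (forall k, Excbar sigma k = Pred (phi sigma) k).
Proof.
case: n hn => [//|m] _.
have hi := @hmap_inj m.
exists (invF hi); split.
  by exists (@hmap m); [exact: f_invF | exact: invF_f].
move=> s; have ht := f_invF hi s; move: (invF hi s) ht => t <-.
split; [|split] => k; [exact: fix_eq | exact: drop_eq | exact: exc_eq].
Qed.
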